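(* Let $w\in[0,\infty)^n$, $c\in(0,\infty)^n$, and let $(A_1,\dots,A_k)$ be any Sidney decomposition of $\mathcal G$ (with respect to $w,c$). Then there exist $i\in\{1,\dots,k\}$ and a search whose support is $A_1\cup\dots\cup A_i$ that minimizes $J^+(\cdot\,;w,c)$ over $\mathcal S$.
   Context: $\mathcal G=([n],\mathcal E)$ is a finite directed acyclic graph on $[n]=\{1,\dots,n\}$. A search is a tuple $s=(s_1,\dots,s_k)$ of distinct vertices ($0\le k\le n$) such that every in-neighbor of each $s_i$ belongs to $\{s_1,\dots,s_{i-1}\}$; $\mathcal S$ denotes the set of searches. The support of a search is its underlying (unordered) set; an initial set is the support of a search. For $A\subseteq[n]$, $\mathcal G|_A$ is the induced sub-DAG on $A$. For $w\in[0,\infty)^n$, $c\in(0,\infty)^n$: $J(s;w,c)=\big(\sum_{i=1}^{|s|}c_{s_i}(1-\sum_{j<i}w_{s_j})\big)/\big(\sum_{i=1}^{|s|}w_{s_i}\big)$ if the denominator is positive and $+\infty$ otherwise (in particular for the empty search); $J^+=\max\{0,J\}$ with $\max\{0,+\infty\}=+\infty$. The density of a nonempty $A\subseteq[n]$ is $\rho(A)=\sum_{i\in A}w_i/\sum_{i\in A}c_i$, and $\rho(\emptyset)=0$. A Sidney decomposition is an ordered partition $(A_1,\dots,A_k)$ of $[n]$ into nonempty sets such that, for each $i$, $A_i$ is an initial set of $\mathcal G|_{A_i\cup\dots\cup A_k}$ of maximum density among all initial sets of $\mathcal G|_{A_i\cup\dots\cup A_k}$. *)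

(* Defs.v *)
(* Vertices [n] are represented by 'I_n; the DAG by an edge
   relation e : rel 'I_n (e u v means u -> v, i.e. u is an in-neighbor of v). *)
From HB Require Import structures.
From mathcomp Require Import all_boot all_order all_algebra.
Set Implicit Arguments. Unset Strict Implicit. Unset Printing Implicit Defensive.
Import Order.TTheory GRing.Theory Num.Theory.
Local Open Scope ring_scope.

Definition acyclic (n : nat) (e : rel 'I_n) : Prop :=
  forall u v, e u v -> ~~ connect e v u.

Definition search_on (n : nat) (e : rel 'I_n) (B : {set 'I_n}) (s : seq 'I_n) : Prop :=
  [/\ uniq s, all (fun x => x \in B) s &
      forall (s1 : seq 'I_n) (v : 'I_n) (s2 : seq 'I_n), s = s1 ++ v :: s2 ->
        forall u, u \in B -> e u v -> u \in s1].

Definition search (n : nat) (e : rel 'I_n) (s : seq 'I_n) : Prop :=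
  search_on e [set: 'I_n] s.

Definition initial_in (n : nat) (e : rel 'I_n) (B X : {set 'I_n}) : Prop :=
  exists s, search_on e B s /\ [set x in s] = X.

Definition density (R : realFieldType) (n : nat) (w c : 'I_n -> R) (A : {set 'I_n}) : R :=
  if A == set0 then 0 else (\sum_(i in A) w i) / (\sum_(i in A) c i).

(* numerator of J: sum_i c_{s_i} (1 - sum_{j<i} w_{s_j}); acc = sum of earlier weights *)
Fixpoint Jnum (R : realFieldType) (n : nat) (w c : 'I_n -> R) (acc : R) (s : seq 'I_n) : R :=
  match s with
  | [::] => 0
  | x :: s' => c x * (1 - acc) + Jnum w c (acc + w x) s'
  end.

(* extended reals [.., +oo]: None = +oo *)
Definition J (R : realFieldType) (n : nat) (w c : 'I_n -> R) (s : seq 'I_n) : option R :=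
  let D := \sum_(x <- s) w x in
  if 0 < D then Some (Jnum w c 0 s / D) else None.

Definition Jplus (R : realFieldType) (n : nat) (w c : 'I_n -> R) (s : seq 'I_n) : option R :=
  match J w c s with Some x => Some (Num.max 0 x) | None => None end.

Definition le_ext (R : realFieldType) (a b : option R) : bool :=
  match a, b with
  | _, None => true
  | None, Some _ => false
  | Some x, Some y => x <= y
  end.

(* Sidney decomposition (A_1,...,A_k) = P (A_{i+1} = nth set0 P i) *)
Definition sidney (R : realFieldType) (n : nat) (e : rel 'I_n) (w c : 'I_n -> R)
    (P : seq {set 'I_n}) : Prop :=
  [/\ forall A, A \in P -> A != set0,
      forall i j, (i < j < size P)%N -> [disjoint nth set0 P i & nth set0 P j],
      \bigcup_(A <- P) A = [set: 'I_n] &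
      forall i, (i < size P)%N ->
        let Rest := \bigcup_(A <- drop i P) A in
        initial_in e Rest (nth set0 P i) /\
        forall X, initial_in e Rest X -> density w c X <= density w c (nth set0 P i)].

(* Main.v *)
Require Import Defs.
From HB Require Import structures.
From mathcomp Require Import all_boot all_order all_algebra.
From mathcomp Require Import ring lra zify.
From Stdlib Require Import Classical.
Set Implicit Arguments. Unset Strict Implicit. Unset Printing Implicit Defensive.
Import Order.TTheory GRing.Theory Num.Theory.
Local Open Scope ring_scope.


Section Searches.
Variable n : nat.
Variable e : rel 'I_n.

Definition before (s : seq 'I_n) (u v : 'I_n) :=
  exists s1 s2, s = s1 ++ v :: s2 /\ u \in s1.

Lemma search_before (B : {set 'I_n}) s v u : search_on e B s -> v \in s -> u \in B -> e u v -> before s u v.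
Proof.
case=> _ _ H vs uB euv; case/splitPr: vs H => p1 p2 H.
exists p1, p2; split => //; exact: (H p1 v p2 erefl u uB euv).
Qed.

Lemma before_filter (p : pred 'I_n) s u v : before s u v -> p u -> p v -> before (filter p s) u v.
Proof.
case=> [s1 [s2 [-> us1]]] pu pv; exists (filter p s1), (filter p s2).
by rewrite filter_cat /= pv; split => //; rewrite mem_filter pu.
Qed.

Lemma before_memu s u v : before s u v -> u \in s.
Proof. by case=> [s1 [s2 [-> us1]]]; rewrite mem_cat us1. Qed.

Lemma before_split s u v s1 s2 : uniq s -> before s u v -> s = s1 ++ v :: s2 -> u \in s1.
Proof.
move=> us [t1 [t2 [Et ut1]]] Es.
have key : forall a b, uniq (a ++ v :: b) -> take (index v (a ++ v :: b)) (a ++ v :: b) = a.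
  move=> a b; rewrite cat_uniq /= => /and3P [_ /norP [vna _] _].
  rewrite index_cat (negbTE vna) /= eqxx addn0 take_size_cat //.
have h1 := key s1 s2; have h2 := key t1 t2.
rewrite -Es in h1; rewrite -Et in h2.
by rewrite -(h1 us) (h2 us).
Qed.

Lemma search_of_before (B : {set 'I_n}) s : uniq s -> all (fun x => x \in B) s ->
  (forall v u, v \in s -> u \in B -> e u v -> before s u v) -> search_on e B s.
Proof.
move=> us aB H; split => // s1 v s2 Es u uB euv.
have vs : v \in s by rewrite Es mem_cat inE eqxx orbT.
exact: before_split us (H v u vs uB euv) Es.
Qed.

Lemma search_uniq (B : {set 'I_n}) s : search_on e B s -> uniq s.
Proof. by case. Qed.
Lemma search_all (B : {set 'I_n}) s : search_on e B s -> all (fun x => x \in B) s.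
Proof. by case. Qed.

Lemma search_filter (B B' : {set 'I_n}) s (p : pred 'I_n) : search_on e B s ->
  (forall x, x \in s -> p x -> x \in B') ->
  (forall v u, v \in s -> p v -> u \in B' -> e u v -> (u \in B) && p u) ->
  search_on e B' (filter p s).
Proof.
move=> ss HB H; apply: search_of_before.
- exact: filter_uniq (search_uniq ss).
- by apply/allP => x; rewrite mem_filter => /andP [px xs]; apply: HB.
move=> v u; rewrite mem_filter => /andP [pv vs] uB' euv.
case/andP: (H v u vs pv uB' euv) => uB pu.
exact: before_filter (search_before ss vs uB euv) pu pv.
Qed.

Lemma search_cat (B : {set 'I_n}) s1 s2 : search_on e B s1 -> uniq (s1 ++ s2) -> all (fun x => x \in B) s2 ->
  (forall v u, v \in s2 -> u \in B -> e u v -> (u \in s1) \/ before s2 u v) ->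
  search_on e B (s1 ++ s2).
Proof.
move=> ss1 u12 a2 H; apply: search_of_before => //.
- by rewrite all_cat (search_all ss1) a2.
move=> v u; rewrite mem_cat => /orP [vs1|vs2] uB euv.
- case: (search_before ss1 vs1 uB euv) => [t1 [t2 [-> ut1]]].
  by exists t1, (t2 ++ s2); rewrite -catA.
- case: (H v u vs2 uB euv) => [us1|[t1 [t2 [-> ut1]]]].
  + case/splitPr: vs2 => p1 p2; exists (s1 ++ p1), p2; split; first by rewrite catA.
    by rewrite mem_cat us1.
  + by exists (s1 ++ t1), t2; rewrite catA mem_cat ut1 orbT.
Qed.

Lemma search_prefix (B : {set 'I_n}) p q : search_on e B (p ++ q) -> search_on e B p.
Proof.
case=> u aB H; split.
- by move: u; rewrite cat_uniq => /and3P [].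
- by move: aB; rewrite all_cat => /andP [].
move=> s1 v s2 Ep; apply: (H s1 v (s2 ++ q)); by rewrite Ep -catA.
Qed.

End Searches.

Section Alg.
Variable R : realFieldType.
Variable n : nat.
Variables w c : 'I_n -> R.
Hypothesis hw : forall i, 0 <= w i.
Hypothesis hc : forall i, 0 < c i.

Definition Wsum (s : seq 'I_n) := \sum_(x <- s) w x.
Definition Csum (s : seq 'I_n) := \sum_(x <- s) c x.

Lemma Wt_cons x s : Wsum (x :: s) = w x + Wsum s.
Proof. by rewrite /Wsum big_cons. Qed.
Lemma Ct_cons x s : Csum (x :: s) = c x + Csum s.
Proof. by rewrite /Csum big_cons. Qed.
Lemma Wt_nil : Wsum [::] = 0. Proof. by rewrite /Wsum big_nil. Qed.
Lemma Ct_nil : Csum [::] = 0. Proof. by rewrite /Csum big_nil. Qed.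
Lemma Wt_cat s1 s2 : Wsum (s1 ++ s2) = Wsum s1 + Wsum s2.
Proof. by rewrite /Wsum big_cat. Qed.
Lemma Ct_cat s1 s2 : Csum (s1 ++ s2) = Csum s1 + Csum s2.
Proof. by rewrite /Csum big_cat. Qed.
Lemma Wt_ge0 s : 0 <= Wsum s.
Proof. by elim: s => [|x s IH]; rewrite ?Wt_nil ?Wt_cons // addr_ge0. Qed.
Lemma Ct_ge0 s : 0 <= Csum s.
Proof. by elim: s => [|x s IH]; rewrite ?Ct_nil ?Ct_cons // addr_ge0 // ltW. Qed.
Lemma Ct_gt0 s : s != [::] -> 0 < Csum s.
Proof. by case: s => [|x s] // _; rewrite Ct_cons ltr_pwDl // Ct_ge0. Qed.

Lemma Wt_split (A : pred 'I_n) s : Wsum s = Wsum (filter A s) + Wsum (filter (predC A) s).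
Proof.
elim: s => [|x s IH]; first by rewrite /= !Wt_nil addr0.
rewrite /= Wt_cons IH; case: (A x) => /=; rewrite Wt_cons; ring.
Qed.
Lemma Ct_split (A : pred 'I_n) s : Csum s = Csum (filter A s) + Csum (filter (predC A) s).
Proof.
elim: s => [|x s IH]; first by rewrite /= !Ct_nil addr0.
rewrite /= Ct_cons IH; case: (A x) => /=; rewrite Ct_cons; ring.
Qed.

Lemma Jnum_shift acc s : Jnum w c acc s = Jnum w c 0 s - acc * Csum s.
Proof.
elim: s acc => [|x s IH] acc /=; first by rewrite Ct_nil; ring.
rewrite Ct_cons IH [Jnum w c (0 + w x) s]IH; ring.
Qed.

Lemma Jnum_cat acc s1 s2 : Jnum w c acc (s1 ++ s2) = Jnum w c acc s1 + Jnum w c (acc + Wsum s1) s2.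
Proof.
elim: s1 acc => [|x s1 IH] acc /=; first by rewrite Wt_nil addr0 add0r.
rewrite IH Wt_cons; have -> : acc + (w x + Wsum s1) = acc + w x + Wsum s1 by rewrite addrA.
by rewrite addrA.
Qed.

Lemma Jnum_lb acc s : (1 - acc - Wsum s) * Csum s <= Jnum w c acc s.
Proof.
elim: s acc => [|x s IH] acc /=; first by rewrite Ct_nil mulr0.
rewrite Wt_cons Ct_cons.
have h1 := IH (acc + w x); have h2 := hw x; have h3 := hc x; have h4 := Wt_ge0 s.
have h5 : 0 <= c x * (w x + Wsum s) by apply: mulr_ge0 => //; [exact: ltW | exact: addr_ge0].
lra.
Qed.

Lemma Jnum_ub acc s : Jnum w c acc s <= (1 - acc) * Csum s.
Proof.
elim: s acc => [|x s IH] acc /=; first by rewrite Ct_nil mulr0.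
rewrite Ct_cons.
have h1 := IH (acc + w x).
have h5 : 0 <= w x * Csum s by apply: mulr_ge0 => //; exact: Ct_ge0.
lra.
Qed.

Lemma N_cat s1 s2 : Jnum w c 0 (s1 ++ s2) = Jnum w c 0 s1 + Jnum w c 0 s2 - Wsum s1 * Csum s2.
Proof. by rewrite Jnum_cat add0r [Jnum _ _ (Wsum s1) _]Jnum_shift; ring. Qed.

Section Reorder.
Variable A : pred 'I_n.
Variable rho : R.

Fixpoint Dd1 (s : seq 'I_n) : R :=
  match s with
  | [::] => 0
  | x :: s' => (if A x then 0 else c x * (Wsum (filter A s') - rho * Csum (filter A s'))) + Dd1 s'
  end.
Fixpoint Dd2 (s : seq 'I_n) : R :=
  match s with
  | [::] => 0
  | x :: s' => (if A x then 0 else Csum (filter A s') * (rho * c x - w x)) + Dd2 s'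
  end.

Lemma Dd1_cons x s : Dd1 (x :: s) = (if A x then 0 else c x * (Wsum (filter A s) - rho * Csum (filter A s))) + Dd1 s.
Proof. by []. Qed.
Lemma Dd2_cons x s : Dd2 (x :: s) = (if A x then 0 else Csum (filter A s) * (rho * c x - w x)) + Dd2 s.
Proof. by []. Qed.
Lemma Dd2_nil : Dd2 [::] = 0. Proof. by []. Qed.

Lemma N_reorder s : Jnum w c 0 s = Jnum w c 0 (filter A s ++ filter (predC A) s) + Dd1 s + Dd2 s.
Proof.
elim: s => [|x s IH] /=; first by rewrite !addr0.
have hC := Ct_split A s.
case Ax: (A x) => /=.
- rewrite [Jnum _ _ (0 + w x) s]Jnum_shift [Jnum _ _ (0 + _) (_ ++ _)]Jnum_shift IH Ct_cat -hC.
  ring.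
- rewrite [Jnum _ _ (0 + w x) s]Jnum_shift IH !N_cat /= [Jnum _ _ (0 + w x) _]Jnum_shift Ct_cons hC.
  ring.
Qed.

Lemma Dd1_ge0 s : (forall p q, s = p ++ q -> rho * Csum (filter A q) <= Wsum (filter A q)) -> 0 <= Dd1 s.
Proof.
elim: s => [|x s IH] H //=.
apply: addr_ge0; last by apply: IH => p q E; apply: (H (x :: p) q); rewrite E.
case: (A x) => //; apply: mulr_ge0; first exact: ltW.
rewrite subr_ge0; exact: (H [:: x] s).
Qed.

Lemma Dd2_rcons p x : Dd2 (rcons p x) =
  Dd2 p + (if A x then c x * (rho * Csum (filter (predC A) p) - Wsum (filter (predC A) p)) else 0).
Proof.
elim: p => [|y p IH].
- rewrite Dd2_cons Dd2_nil Ct_nil Wt_nil; case: (A x); rewrite /= ?Ct_nil; ring.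
rewrite rcons_cons !Dd2_cons IH filter_rcons /=; case Ay: (A y); case Ax: (A x);
  rewrite /= -?cats1 ?Ct_cons ?Wt_cons ?Ct_cat ?Ct_cons ?Ct_nil; ring.
Qed.

Lemma Dd2_ge0 s : (forall p q, s = p ++ q -> Wsum (filter (predC A) p) <= rho * Csum (filter (predC A) p)) ->
  0 <= Dd2 s.
Proof.
elim/last_ind: s => [|s x IH] H //=.
rewrite Dd2_rcons; apply: addr_ge0.
  apply: IH => p q E; apply: (H p (rcons q x)); by rewrite E rcons_cat.
case: (A x) => //; apply: mulr_ge0; first exact: ltW.
rewrite subr_ge0; apply: (H s [:: x]); by rewrite cats1.
Qed.

End Reorder.
End Alg.

Section Main.
Variable R : realFieldType.
Variable n : nat.
Variable e : rel 'I_n.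
Variables w c : 'I_n -> R.
Hypothesis hw : forall i, 0 <= w i.
Hypothesis hc : forall i, 0 < c i.

Notation Wt := (Wsum w).
Notation Ct := (Csum c).

Lemma Wt_set s : uniq s -> Wt s = \sum_(i in [set x in s]) w i.
Proof. by move=> us; rewrite /Wsum big_uniq //; apply: eq_bigl => i; rewrite inE. Qed.
Lemma Ct_set s : uniq s -> Ct s = \sum_(i in [set x in s]) c i.
Proof. by move=> us; rewrite /Csum big_uniq //; apply: eq_bigl => i; rewrite inE. Qed.

Lemma set0_nil (s : seq 'I_n) : ([set x in s] == set0) = (s == [::]).
Proof.
case: s => [|x s]; first by apply/eqP/setP => y; rewrite !inE.
apply/negbTE/set0Pn; exists x; by rewrite inE mem_head.
Qed.

Section Block.
Variables (B A : {set 'I_n}) (a : seq 'I_n).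
Hypotheses (sa : search_on e B a) (Ea : [set x in a] = A) (A0 : A != set0)
  (hmax : forall X, initial_in e B X -> density w c X <= density w c A).

Definition rho := density w c A.

Lemma rho_eq : Wt a = rho * Ct a.
Proof.
have ua := search_uniq sa.
have an : a != [::] by rewrite -set0_nil Ea.
rewrite /rho /density (negbTE A0) -Ea -Wt_set // -Ct_set // divfK //.
by rewrite gt_eqF // Ct_gt0.
Qed.

Lemma dens_bound l : search_on e B l -> Wt l <= rho * Ct l.
Proof.
move=> sl; have ul := search_uniq sl.
have := hmax (ex_intro _ l (conj sl erefl)).
rewrite /density; case: ifP => [/eqP E0|]; last first.
  rewrite set0_nil => /negbT ln; rewrite -Wt_set // -Ct_set // ler_pdivrMr; last exact: Ct_gt0.
  by rewrite mulrC.
move: E0; move/eqP; rewrite set0_nil => /eqP ->.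
by rewrite /Wsum /Csum !big_nil mulr0.
Qed.

Lemma inA v u : v \in A -> u \in B -> e u v -> u \in A.
Proof.
move=> vA uB euv; rewrite -Ea inE.
apply: before_memu (search_before sa _ uB euv) ; by rewrite -Ea inE in vA.
Qed.

End Block.

Definition U (l : seq {set 'I_n}) := \bigcup_(X <- l) X.
Lemma U_cons A l : U (A :: l) = A :|: U l.
Proof. by rewrite /U big_cons. Qed.
Lemma U_nil : U [::] = set0.
Proof. by rewrite /U big_nil. Qed.

Fixpoint sid_on (l : seq {set 'I_n}) : Prop :=
  match l with
  | [::] => True
  | A :: l' => [/\ A != set0, [disjoint A & U l'], initial_in e (A :|: U l') A,
      (forall X, initial_in e (A :|: U l') X -> density w c X <= density w c A) & sid_on l']
  end.

Definition Phi acc lam s := Jnum w c acc s - lam * Wt s.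

Lemma Phi_cat acc lam s1 s2 : Phi acc lam (s1 ++ s2) = Phi acc lam s1 + Phi (acc + Wt s1) lam s2.
Proof. rewrite /Phi Jnum_cat Wt_cat; ring. Qed.

Lemma Phi_nil acc lam : Phi acc lam [::] = 0.
Proof. by rewrite /Phi /Wsum big_nil /=; ring. Qed.

Lemma search_nil B : search_on e B [::].
Proof. by split => // s1 v s2; case: s1. Qed.


Lemma mainP l : sid_on l -> forall lam, 0 <= lam -> forall acc s, search_on e (U l) s ->
  exists i t, [/\ (i <= size l)%N, search_on e (U l) t, [set x in t] = U (take i l),
     Phi acc lam t <= Phi acc lam s & (i = 0%N -> s = [::] \/ Phi acc lam t < Phi acc lam s)].
Proof.
move=> + lam lam0; elim: l => [|A l IH] /=.
  move=> _ acc s ss.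
  have s0 : s = [::].
    by case: s ss => // x s ss; have := search_all ss; rewrite /= U_nil inE.
  subst s; exists 0%N, [::]; split => //; last by left.
  by rewrite U_nil; apply/setP => x; rewrite !inE.
case=> A0 dis [a [sa Ea]] hmax sl acc s ss.
rewrite U_cons in ss *.
set B := A :|: U l in ss sa hmax *.
have IH' := IH sl.
pose pA := (fun x : 'I_n => x \in A).
have UlB : forall x, x \in U l -> x \in B by move=> x xU; rewrite inE xU orbT.
have notA : forall x, x \in U l -> x \notin A by move=> x xU; rewrite (disjointFl dis xU).
have inA' := inA sa Ea.
have aA : forall x, (x \in a) = (x \in A) by move=> x; rewrite -Ea inE.
have sfA : forall p, search_on e B p -> search_on e B (filter pA p).
  move=> p sp; apply: (search_filter sp).
  - by move=> x xp _; exact: (allP (search_all sp)).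
  - move=> v u _ vA uB euv; rewrite uB /=; exact: inA' vA uB euv.
have case1 : forall acc s, search_on e B s -> A \subset [set x in s] ->
    exists i t, [/\ (0 < i <= (size l).+1)%N, search_on e B t,
      [set x in t] = U (take i (A :: l)) & Phi acc lam t <= Phi acc lam s].
  move=> acc' s' ss' sub.
  set L := filter pA s'; set M := filter (predC pA) s'.
  have sL := sfA _ ss'.
  have sM : search_on e (U l) M.
    apply: (search_filter ss').
    - move=> x xs; rewrite /= /pA => xA; have := allP (search_all ss') x xs; by rewrite inE (negbTE xA).
    - move=> v u _ _ uU euv; rewrite UlB //=; exact: notA.
  have us' := search_uniq ss'.
  have Lperm : perm_eq L a.
    apply: uniq_perm; [exact: filter_uniq | exact: search_uniq sa|].
    move=> x; rewrite mem_filter /pA aA.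
    case xA: (x \in A) => //=; by have := subsetP sub x xA; rewrite inE.
  have WLa : Wt L = Wt a by apply: perm_big.
  have CLa : Ct L = Ct a by apply: perm_big.
  have hra := rho_eq sa Ea A0.
  have Hred : Jnum w c acc' (L ++ M) <= Jnum w c acc' s'.
    rewrite Jnum_shift [Jnum w c acc' s']Jnum_shift Ct_cat -Ct_split.
    have h1 := N_reorder w c pA (rho A) s'.
    have h2 : 0 <= Dd1 w c pA (rho A) s'.
      apply: Dd1_ge0 => // p q E.
      have sp : search_on e B p by apply: (search_prefix (q:=q)); rewrite -E.
      have h3 := dens_bound hmax (sfA _ sp).
      have EL : L = filter pA p ++ filter pA q by rewrite /L E filter_cat.
      have h4 : Wt L = Wt (filter pA p) + Wt (filter pA q) by rewrite EL Wt_cat.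
      have h5 : Ct L = Ct (filter pA p) + Ct (filter pA q) by rewrite EL Ct_cat.
      have h6 : Wt L = rho A * Ct L by rewrite WLa CLa.
      rewrite h5 mulrDr in h6; lra.
    have h3 : 0 <= Dd2 w c pA (rho A) s'.
      apply: Dd2_ge0 => // p q E.
      have sp : search_on e B p by apply: (search_prefix (q:=q)); rewrite -E.
      have sap : search_on e B (a ++ filter (predC pA) p).
        apply: (search_cat sa).
        - rewrite cat_uniq (search_uniq sa) filter_uniq ?(search_uniq sp) // andbT.
          by apply/hasPn => x; rewrite mem_filter /= aA => /andP [].
        - by apply/allP => x; rewrite mem_filter => /andP [_ xp]; exact: (allP (search_all sp)).
        - move=> v u; rewrite mem_filter => /andP [vA vp] uB euv.
          case uA: (u \in A); first by left; rewrite aA.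
          right; apply: before_filter (search_before sp vp uB euv) _ _ => //=.
          by rewrite /pA uA.
      have := dens_bound hmax sap; rewrite Wt_cat Ct_cat hra; lra.
    lra.
  have [j [t2 [hj st2 Et2 hle _]]] := IH' (acc' + Wt L) M sM.
  exists j.+1, (L ++ t2); split.
  - by rewrite ltnS.
  - apply: (search_cat sL).
    + rewrite cat_uniq filter_uniq // (search_uniq st2) andbT.
      apply/hasPn => x xt2; rewrite mem_filter negb_and.
      have xU : x \in U l by exact: (allP (search_all st2)).
      by rewrite /pA (negbTE (notA _ xU)).
    + apply/allP => x xt2; apply: UlB; exact: (allP (search_all st2)).
    + move=> v u vt2 uB euv; case uA: (u \in A).
        left; rewrite mem_filter /pA uA /=; by have := subsetP sub u uA; rewrite inE.
      right; apply: search_before st2 vt2 _ euv.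
      by move: uB; rewrite inE uA.
  - apply/setP => x; rewrite /= U_cons -Et2 !inE mem_cat mem_filter /pA.
    case xA: (x \in A) => //=.
    by have := subsetP sub x xA; rewrite inE => ->.
  - have hM : Phi acc' lam (L ++ M) <= Phi acc' lam s'.
      have hW : Wt (L ++ M) = Wt s' by rewrite Wt_cat -Wt_split.
      rewrite /Phi hW; lra.
    rewrite Phi_cat in hM; rewrite Phi_cat; lra.
case: (boolP (A \subset [set x in s])) => sub.
  have [i [t [hi st Et hle]]] := case1 acc s ss sub.
  exists i, t; split => //; first by case/andP: hi.
  by move=> i0; rewrite i0 in hi.
set r := filter (fun x => x \notin s) a.
have ua := search_uniq sa; have us := search_uniq ss.
have sr : search_on e B (s ++ r).
  apply: (search_cat ss).
  - rewrite cat_uniq us filter_uniq // andbT.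
    by apply/hasPn => x; rewrite mem_filter => /andP [].
  - by apply/allP => x; rewrite mem_filter => /andP [_ xa]; exact: (allP (search_all sa)).
  - move=> v u; rewrite mem_filter => /andP [vs va] uB euv.
    case us': (u \in s); first by left.
    right; apply: before_filter (search_before sa va uB euv) _ _ => /=; by rewrite ?us' ?vs.
have subr : A \subset [set x in s ++ r].
  apply/subsetP => x xA; rewrite inE mem_cat mem_filter aA xA.
  by case: (x \in s).
case: (lerP (Phi (acc + Wt s) lam r) 0) => hr.
  have [i [t [hi st Et hle]]] := case1 acc (s ++ r) sr subr.
  exists i, t; split => //; first by case/andP: hi.
  - rewrite Phi_cat in hle; lra.
  - by move=> i0; rewrite i0 in hi.
exists 0%N, [::]; rewrite Phi_nil.
have rn : r != [::].
  case/subsetPn: sub => x xA; rewrite inE => xs.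
  apply/eqP => r0.
  have : x \in r by rewrite mem_filter xs aA.
  by rewrite r0.
have Cr := Ct_gt0 hc rn.
have Wr : rho A * Ct r <= Wt r.
  have sin : search_on e B (filter (fun x => x \in s) a).
    apply: (search_filter sa).
    - by move=> x xa _; exact: (allP (search_all sa)).
    - move=> v u va vs uB euv; rewrite uB /=; exact: before_memu (search_before ss vs uB euv).
  have h1 := dens_bound hmax sin.
  have h2 := rho_eq sa Ea A0.
  have h3 : Wt a = Wt (filter (fun x => x \in s) a) + Wt r := Wt_split w (fun x => x \in s) a.
  have h4 : Ct a = Ct (filter (fun x => x \in s) a) + Ct r := Ct_split c (fun x => x \in s) a.
  rewrite h4 mulrDr in h2; lra.
have Jr := Jnum_ub hw hc (acc + Wt s) r.
set rh := rho A in Wr *.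
have key : lam * rh < 1 - (acc + Wt s).
  have h5 : lam * (rh * Ct r) <= lam * Wt r := ler_wpM2l lam0 Wr.
  have h6 : 0 < (1 - (acc + Wt s) - lam * rh) * Ct r.
    rewrite /Phi in hr.
    have -> : (1 - (acc + Wt s) - lam * rh) * Ct r = (1 - (acc + Wt s)) * Ct r - lam * (rh * Ct r) by ring.
    lra.
  rewrite pmulr_lgt0 // in h6; lra.
have Phis : (1 - (acc + Wt s) - lam * rh) * Ct s <= Phi acc lam s.
  have h7 := Jnum_lb hw hc acc s.
  have h8 := dens_bound hmax ss.
  have h9 : lam * Wt s <= lam * (rh * Ct s) := ler_wpM2l lam0 h8.
  rewrite /Phi.
  have -> : (1 - (acc + Wt s) - lam * rh) * Ct s = (1 - acc - Wt s) * Ct s - lam * (rh * Ct s) by ring.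
  lra.
split => //.
- exact: search_nil.
- by rewrite take0 U_nil; apply/setP => x; rewrite !inE.
- apply: le_trans Phis; apply: mulr_ge0; [lra | exact: Ct_ge0].
- move=> _; case: (altP (s =P [::])) => [->|sn]; [by left | right].
  apply: lt_le_trans Phis; apply: mulr_gt0; [lra | exact: Ct_gt0].
Qed.

End Main.

Section Fin.
Variable R : realFieldType.
Variable n : nat.
Variable e : rel 'I_n.
Variables w c : 'I_n -> R.

Lemma disj_U (A : {set 'I_n}) (l : seq {set 'I_n}) : (forall X, X \in l -> [disjoint A & X]) -> [disjoint A & U l].
Proof.
elim: l => [|X l IH] H.
  by rewrite -setI_eq0 U_nil setI0.
rewrite -setI_eq0 U_cons setIUr setU_eq0 !setI_eq0 H ?mem_head //=.
by apply: IH => Y Yl; apply: H; rewrite inE Yl orbT.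
Qed.

Lemma sid_conv P : sidney e w c P -> forall i, sid_on e w c (drop i P).
Proof.
case=> hne hdis hU hmax.
suff H : forall k i, (size P - i)%N = k -> sid_on e w c (drop i P) by move=> i; exact: H _ i erefl.
elim=> [|k IH] i Hk.
  by rewrite drop_oversize //; lia.
have ilt : (i < size P)%N by lia.
rewrite (drop_nth set0 ilt) /=.
have [h1 h2] := hmax i ilt.
rewrite /= (drop_nth set0 ilt) big_cons in h1 h2.
split => //.
- by apply: hne; exact: mem_nth.
- apply: disj_U => X; case/(nthP set0) => k' hk' <-.
  rewrite nth_drop; apply: hdis.
  rewrite size_drop in hk'; apply/andP; split; first exact: leq_addr.
  by rewrite -ltn_subRL.
- apply: IH; lia.
Qed.

Fixpoint allseqs (k : nat) : seq (seq 'I_n) :=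
  match k with
  | 0 => [:: [::]]
  | k'.+1 => [::] :: flatten [seq [seq x :: l | l <- allseqs k'] | x <- enum 'I_n]
  end.

Lemma allseqs_mem k s : (size s <= k)%N -> s \in allseqs k.
Proof.
elim: k s => [|k IH] [|x s] //= hs.
rewrite inE; apply/orP; right; apply/flattenP.
exists [seq x :: l | l <- allseqs k]; first by apply/mapP; exists x; rewrite ?mem_enum.
by apply/mapP; exists s => //; apply: IH.
Qed.

Lemma le_ext_refl (a : option R) : le_ext a a.
Proof. by case: a => //= x. Qed.
Lemma le_ext_trans (a b d : option R) : le_ext a b -> le_ext b d -> le_ext a d.
Proof. by case: a; case: b; case: d => //= x y z; apply: le_trans. Qed.
Lemma le_ext_total (a b : option R) : le_ext a b || le_ext b a.
Proof. by case: a; case: b => //= x y; exact: le_total. Qed.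

Lemma exists_min (L : seq (seq 'I_n)) (Pr : seq 'I_n -> Prop) (f : seq 'I_n -> option R) :
  (exists x, x \in L /\ Pr x) ->
  exists m, Pr m /\ forall y, y \in L -> Pr y -> le_ext (f m) (f y).
Proof.
elim: L => [|x L IH]; first by case=> y [].
case=> y [yL Py].
case: (classic (exists y, y \in L /\ Pr y)) => [ex|nex].
  have [m [Pm Hm]] := IH ex.
  case: (classic (Pr x)) => Px; last first.
    exists m; split => // z; rewrite inE => /orP [/eqP ->|zL] Pz //; exact: Hm.
  case Hmx: (le_ext (f m) (f x)).
    exists m; split => // z; rewrite inE => /orP [/eqP ->|zL] Pz //; exact: Hm.
  have Hxm : le_ext (f x) (f m) by have := le_ext_total (f m) (f x); rewrite Hmx.
  exists x; split => // z; rewrite inE => /orP [/eqP ->|zL] Pz; first exact: le_ext_refl.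
  exact: le_ext_trans Hxm (Hm z zL Pz).
have Px : Pr x.
  move: yL; rewrite inE => /orP [/eqP <- //|yL']; by case: nex; exists y.
exists x; split => // z; rewrite inE => /orP [/eqP ->|zL] Pz; first exact: le_ext_refl.
by case: nex; exists z.
Qed.

End Fin.

Theorem mainTheorem3 (R : realFieldType) (n : nat) (e : rel 'I_n)
  (hn : (0 < n)%N) (hG : acyclic e)
  (w c : 'I_n -> R) (hw : forall i, 0 <= w i) (hc : forall i, 0 < c i)
  (P : seq {set 'I_n}) (hP : sidney e w c P) :
  exists i : nat, (1 <= i <= size P)%N /\
    exists s : seq 'I_n, [/\ search e s,
      [set x in s] = \bigcup_(A <- take i P) A &
      forall t, search e t -> le_ext (Jplus w c s) (Jplus w c t)].
Proof.
have hs := sid_conv hP 0; rewrite drop0 in hs.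
case: hP => _ _ hU _.
have UT : U P = [set: 'I_n] by exact: hU.
case: P hs hU UT => [|A l] hs hU UT.
  have := in_setT (Ordinal hn); by rewrite -UT U_nil inE.
have hs' := hs.
case: hs => A0 dis [a [sa Ea]] hmax sl.
have sz : forall y : seq 'I_n, uniq y -> (size y <= n)%N.
  move=> y uy; rewrite -(card_uniqP uy); have := max_card (mem y); by rewrite card_ord.
have [m [sm hm]] := @exists_min R n (allseqs n n) (search e) (Jplus w c)
  (ex_intro _ [::] (conj (@allseqs_mem n n [::] (leq0n n)) (search_nil e _))).
have hm' : forall y, search e y -> le_ext (Jplus w c m) (Jplus w c y).
  move=> y sy; apply: hm => //; apply: allseqs_mem; apply: sz; exact: (search_uniq sy).
case Jm: (Jplus w c m) => [mu|]; last first.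
  exists 1%N; split => //.
  exists a; split.
  - by rewrite /search -UT U_cons.
  - by rewrite Ea /= take0 big_cons big_nil setU0.
  - move=> t st; have := hm' t st; rewrite Jm.
    by case: (Jplus w c t) => //; case: (Jplus w c a).
have Jm' := Jm; rewrite /Jplus /J in Jm'; move: Jm'; case: ifP => // Wpos [Emu].
set xm := Jnum w c 0 m / \sum_(x <- m) w x in Emu.
have lam0 : 0 <= mu by rewrite -Emu le_max lexx.
have xmu : xm <= mu by rewrite -Emu le_max lexx orbT.
have Phim : Phi w c 0 mu m <= 0.
  rewrite /Phi; move: xmu; rewrite /xm ler_pdivrMr //.
  rewrite /Wsum mulrC; lra.
have smU : search_on e (U (A :: l)) m by rewrite UT.
have [i [t [hi st Et hle hi0]]] := mainP hw hc hs' lam0 0 smU.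
have i0 : i != 0%N.
  apply/eqP => i0; case: (hi0 i0) => [m0|hlt].
    by move: Wpos; rewrite m0 big_nil ltxx.
  have t0 : t = [::].
    by apply/eqP; rewrite -set0_nil Et i0 take0 U_nil.
  by move: hlt; rewrite t0 Phi_nil; lra.
have tn : t != [::].
  rewrite -set0_nil Et; case: i i0 {hi hi0 Et} => // i _.
  rewrite /= U_cons; apply/set0Pn; case/set0Pn: A0 => x xA; exists x; by rewrite inE xA.
have Ct0 := Ct_gt0 hc tn.
have Phit : Jnum w c 0 t <= mu * Wsum w t by move: (le_trans hle Phim); rewrite /Phi; lra.
have Wt0 : 0 < Wsum w t.
  rewrite lt_def Wt_ge0 // andbT; apply/eqP => W0.
  have := Jnum_lb hw hc 0 t; rewrite W0 in Phit; rewrite W0; lra.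
exists i; split; first by rewrite lt0n i0.
exists t; split.
- by rewrite /search -UT.
- exact: Et.
move=> y sy; have := hm' y sy; rewrite Jm.
have Wt0' : 0 < \sum_(x <- t) w x := Wt0.
have -> : Jplus w c t = Some (Num.max 0 (Jnum w c 0 t / Wsum w t)) by rewrite /Jplus /J Wt0'.
case: (Jplus w c y) => // v /= hmv.
apply: le_trans hmv; rewrite ge_max lam0 /= ler_pdivrMr //; exact: Phit.
Qed.
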